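(* For all $t\ge 2$, in $\mathbb{F}_2[w_2,w_3]$ one has \[ r_{2^{t-1}-2}=q_{2^t-4},\qquad w_3r_{2^{t-1}-4}=q_{2^t-5},\qquad r_{2^{t-1}-1}=q_{2^t-2}. \]
   Context: In $\mathbb{F}_2[w_2,w_3]$: $q_0=1$, $q_m=0$ for $m<0$, $q_m=w_2q_{m-2}+w_3q_{m-3}$ for $m\ge1$; $r_0=1$, $r_m=0$ for $m<0$, $r_{m+1}=w_2r_m+w_3^2r_{m-2}$ for $m\ge0$. *)

(* Defs.v *)
From HB Require Import structures.
From mathcomp Require Import all_boot all_order all_algebra.
From mathcomp Require Import mpoly.
Set Implicit Arguments. Unset Strict Implicit. Unset Printing Implicit Defensive.
Import Order.TTheory GRing.Theory Num.Theory.
Local Open Scope ring_scope.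

Notation P := {mpoly 'F_2[2]}.
Definition w2 : P := 'X_(@Ordinal 2 0 isT).
Definition w3 : P := 'X_(@Ordinal 2 1 isT).

(* qtrip n = (q_n, q_{n-1}, q_{n-2}) with q_m = 0 for m < 0. *)
Fixpoint qtrip (n : nat) : P * P * P :=
  match n with
  | 0 => (1, 0, 0)
  | n'.+1 => let '(a, b, c) := qtrip n' in (w2 * b + w3 * c, a, b)
  end.

(* rtrip n = (r_n, r_{n-1}, r_{n-2}) with r_m = 0 for m < 0. *)
Fixpoint rtrip (n : nat) : P * P * P :=
  match n with
  | 0 => (1, 0, 0)
  | n'.+1 => let '(a, b, c) := rtrip n' in (w2 * a + w3 ^+ 2 * c, a, b)
  end.

Definition q (m : int) : P :=
  match m with Posz n => (qtrip n).1.1 | Negz _ => 0 end.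
Definition r (m : int) : P :=
  match m with Posz n => (rtrip n).1.1 | Negz _ => 0 end.

(* Main.v *)
Require Import Defs.
From HB Require Import structures.
From mathcomp Require Import all_boot all_order all_algebra.
From mathcomp Require Import mpoly.
From mathcomp Require Import ring lra zify.
Import Order.TTheory GRing.Theory Num.Theory.
Local Open Scope ring_scope.

Lemma two0 (x : P) : x + x = 0.
Proof.
have h : (1 + 1 : 'F_2) = 0 by apply/eqP.
have : (1 + 1 : P) = 0.
  by rewrite -[1 : P]mpolyC1 -mpolyCD h mpolyC0.
by move=> e; rewrite -[x]mul1r -mulrDl e mul0r.
Qed.

Lemma sqrD (a b : P) : (a + b) ^+ 2 = a ^+ 2 + b ^+ 2.
Proof.
have -> : (a + b) ^+ 2 = a ^+ 2 + b ^+ 2 + (a * b + a * b) by ring.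
by rewrite two0 addr0.
Qed.



Lemma qneg (m : int) : m < 0 -> q m = 0.
Proof. by case: m. Qed.
Lemma rneg (m : int) : m < 0 -> r m = 0.
Proof. by case: m. Qed.


Lemma qtripE (n : nat) : qtrip n = (q n, q (n%:Z - 1), q (n%:Z - 2)).
Proof.
elim: n => [//|n IH].
have e1 : (n.+1%:Z - 1) = n%:Z by lia.
have e2 : (n.+1%:Z - 2) = n%:Z - 1 by lia.
rewrite e1 e2 [qtrip _.+1]/= IH.
by rewrite [q n.+1]/= IH.
Qed.

Lemma rtripE (n : nat) : rtrip n = (r n, r (n%:Z - 1), r (n%:Z - 2)).
Proof.
elim: n => [//|n IH].
have e1 : (n.+1%:Z - 1) = n%:Z by lia.
have e2 : (n.+1%:Z - 2) = n%:Z - 1 by lia.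
rewrite e1 e2 [rtrip _.+1]/= IH.
by rewrite [r n.+1]/= IH.
Qed.


Lemma qrec (m : int) : 1 <= m -> q m = w2 * q (m - 2) + w3 * q (m - 3).
Proof.
case: m => // [[|n]] // _.
have e1 : (n.+1%:Z - 2) = n%:Z - 1 by lia.
have e2 : (n.+1%:Z - 3) = n%:Z - 2 by lia.
by rewrite e1 e2 [q n.+1]/= qtripE.
Qed.

Lemma rrec (m : int) : 1 <= m -> r m = w2 * r (m - 1) + w3 ^+ 2 * r (m - 3).
Proof.
case: m => // [[|n]] // _.
have e1 : (n.+1%:Z - 1) = n%:Z by lia.
have e2 : (n.+1%:Z - 3) = n%:Z - 2 by lia.
by rewrite e1 e2 [r n.+1]/= rtripE.
Qed.

Definition Pq (k : int) := q (2 * k) = q k ^+ 2 + w2 * q (k - 1) ^+ 2 /\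
  q (2 * k + 1) = w3 * q (k - 1) ^+ 2.
Definition Pr (k : int) := r (2 * k) = r k ^+ 2 /\
  r (2 * k + 1) = w2 * r k ^+ 2 + w3 ^+ 2 * r (k - 1) ^+ 2.

Lemma Pq_nat (n : nat) : Pq n /\ Pq (n%:Z - 1).
Proof.
elim: n => [|n [IH1 IH2]].
  split; split.
  - have q0 : q 0 = 1 by [].
    by rewrite mulr0 [q (_ - 1)]qneg // q0 expr1n expr2 mul0r mulr0 addr0.
  - rewrite [q (_ - 1)]qneg // expr2 mul0r mulr0 mulr0 add0r.
    by rewrite qrec // !qneg // !mulr0 addr0.
  - by rewrite !qneg //; ring.
  - by rewrite !qneg //; ring.
have e : (n.+1%:Z - 1) = n by lia.
rewrite e; split => //.
move: IH1 IH2; rewrite /Pq.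
have e1 : (n%:Z - 1 - 1) = n%:Z - 2 by lia.
have e2 : (2 * (n%:Z - 1) + 1) = 2 * n%:Z - 1 by lia.
rewrite e1 e2 => -[h1 h2] [_ h4].
rewrite (qrec (2 * n.+1%:Z)); last by lia.
rewrite (qrec (2 * n.+1%:Z + 1)); last by lia.
rewrite (qrec (n.+1%:Z)); last by lia.
have -> : (2 * n.+1%:Z - 2) = 2 * n%:Z by lia.
have -> : (2 * n.+1%:Z - 3) = 2 * n%:Z - 1 by lia.
have -> : (2 * n.+1%:Z + 1 - 2) = 2 * n%:Z + 1 by lia.
have -> : (2 * n.+1%:Z + 1 - 3) = 2 * n%:Z by lia.
have -> : (n.+1%:Z - 2) = n%:Z - 1 by lia.
have -> : (n.+1%:Z - 3) = n%:Z - 2 by lia.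
rewrite h1 h2 h4 e; split.
  rewrite sqrD; ring.
have -> : w2 * (w3 * q (n%:Z - 1) ^+ 2) + w3 * (q n ^+ 2 + w2 * q (n%:Z - 1) ^+ 2)
  = w3 * q n ^+ 2 + (w2 * w3 * q (n%:Z - 1) ^+ 2 + w2 * w3 * q (n%:Z - 1) ^+ 2) by ring.
by rewrite two0 addr0.
Qed.

Lemma Pr_nat (n : nat) : Pr n /\ Pr (n%:Z - 1).
Proof.
elim: n => [|n [IH1 IH2]].
  split; split.
  - have r0 : r 0 = 1 by [].
    by rewrite mulr0 r0 expr1n.
  - have r0 : r 0 = 1 by [].
    by rewrite mulr0 add0r rrec // [r (1 - 3)]rneg // [r (0%Z - 1)]rneg // subrr r0 expr1n [0 ^+ 2]expr2 !(mulr0, mul0r).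
  - by rewrite !rneg // expr2 mulr0.
  - by rewrite !rneg // expr2 !mulr0 addr0.
have e : (n.+1%:Z - 1) = n by lia.
rewrite e; split => //.
move: IH1 IH2; rewrite /Pr.
have e1 : (n%:Z - 1 - 1) = n%:Z - 2 by lia.
have e2 : (2 * (n%:Z - 1) + 1) = 2 * n%:Z - 1 by lia.
rewrite e1 e2 => -[h1 h2] [_ h4].
have H1 : r (2 * n.+1%:Z) = r n.+1 ^+ 2.
  rewrite (rrec (2 * n.+1%:Z)); last by lia.
  rewrite (rrec (n.+1%:Z)); last by lia.
  have -> : (2 * n.+1%:Z - 1) = 2 * n%:Z + 1 by lia.
  have -> : (2 * n.+1%:Z - 3) = 2 * n%:Z - 1 by lia.
  have -> : (n.+1%:Z - 3) = n%:Z - 2 by lia.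
  rewrite e h2 h4 sqrD.
  have -> : w2 * (w2 * r n ^+ 2 + w3 ^+ 2 * r (n%:Z - 1) ^+ 2) +
    w3 ^+ 2 * (w2 * r (n%:Z - 1) ^+ 2 + w3 ^+ 2 * r (n%:Z - 2) ^+ 2) =
    (w2 * r n) ^+ 2 + (w3 ^+ 2 * r (n%:Z - 2)) ^+ 2 +
    (w2 * w3 ^+ 2 * r (n%:Z - 1) ^+ 2 + w2 * w3 ^+ 2 * r (n%:Z - 1) ^+ 2) by ring.
  by rewrite two0 addr0.
split => //.
rewrite (rrec (2 * n.+1%:Z + 1)); last by lia.
have -> : (2 * n.+1%:Z + 1 - 1) = 2 * n.+1%:Z by lia.
have -> : (2 * n.+1%:Z + 1 - 3) = 2 * n%:Z by lia.
by rewrite H1 h1 e.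
Qed.

Lemma qdbl (k : int) : Pq k.
Proof.
case: k => [n|n]; first exact: (Pq_nat n).1.
rewrite /Pq !qneg //; last by rewrite -subr_lt0 /=; lia.
all: try (rewrite expr2 ?mulr0 ?addr0 //).
all: lia.
Qed.

Lemma rdbl (k : int) : Pr k.
Proof.
case: k => [n|n]; first exact: (Pr_nat n).1.
split; rewrite !rneg //; try lia; rewrite expr2 ?mulr0 ?addr0 //.
Qed.

Definition Claim (M : int) :=
  [/\ r (M - 2) = q (2 * M - 4), w3 * r (M - 4) = q (2 * M - 5)
    & r (M - 1) = q (2 * M - 2)].

Lemma Zstep {M : int} : q (M - 3) = 0 -> q (2 * M - 3) = 0.
Proof.
move=> h.
have -> : 2 * M - 3 = 2 * (M - 2) + 1 by ring.
rewrite (qdbl (M - 2)).2.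
have -> : M - 2 - 1 = M - 3 by ring.
by rewrite h expr2 !mulr0.
Qed.

Lemma Cstep (M : int) : q (M - 3) = 0 -> Claim M -> Claim (2 * M).
Proof.
move=> Z [c1 c2 c3].
have Z2 := Zstep (M:=M) Z.
have qa : q (2 * M - 1) = w3 * q (M - 2) ^+ 2.
  have -> : 2 * M - 1 = 2 * (M - 1) + 1 by ring.
  rewrite (qdbl (M - 1)).2.
  by have -> : M - 1 - 1 = M - 2 by ring.
have qb : q (2 * M - 4) = q (M - 2) ^+ 2.
  have -> : 2 * M - 4 = 2 * (M - 2) by ring.
  rewrite (qdbl (M - 2)).1.
  have -> : M - 2 - 1 = M - 3 by ring.
  by rewrite Z [0 ^+ 2]expr2 mul0r mulr0 addr0.
split.
- have -> : 2 * M - 2 = 2 * (M - 1) by ring.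
  have -> : 2 * (2 * M) - 4 = 2 * (2 * M - 2) by ring.
  rewrite (rdbl (M - 1)).1 (qdbl (2 * M - 2)).1.
  have -> : 2 * M - 2 - 1 = 2 * M - 3 by ring.
  by rewrite Z2 c3 [0 ^+ 2]expr2 mul0r mulr0 addr0.
- have -> : 2 * M - 4 = 2 * (M - 2) by ring.
  have -> : 2 * (2 * M) - 5 = 2 * (2 * M - 3) + 1 by ring.
  rewrite (rdbl (M - 2)).1 (qdbl (2 * M - 3)).2.
  have -> : 2 * M - 3 - 1 = 2 * M - 4 by ring.
  by rewrite c1.
- have -> : 2 * M - 1 = 2 * (M - 1) + 1 by ring.
  have -> : 2 * (2 * M) - 2 = 2 * (2 * M - 1) by ring.
  rewrite (rdbl (M - 1)).2 (qdbl (2 * M - 1)).1.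
  have -> : M - 1 - 1 = M - 2 by ring.
  have -> : 2 * M - 1 - 1 = 2 * M - 2 by ring.
  rewrite c3 c1 qa qb.
  rewrite addrC; congr (_ + _).
  ring.
Qed.

Lemma pow_claim (u : nat) : Claim (2 ^ u.+1)%N%:Z /\ q ((2 ^ u.+1)%N%:Z - 3) = 0.
Proof.
elim: u => [|u [C Z]].
  split; last by rewrite qneg.
  rewrite /Claim /=.
split => //; first by rewrite mulr0.
  by rewrite !mulr0.
have -> : (2 ^ u.+2)%N%:Z = 2 * (2 ^ u.+1)%N%:Z by rewrite expnS PoszM.
split; first exact: Cstep.
exact: Zstep.
Qed.

Theorem mainTheorem16 (t : nat) (ht : (2 <= t)%N) :
  [/\ r ((2 ^ t.-1)%N%:Z - 2) = q ((2 ^ t)%N%:Z - 4),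
      w3 * r ((2 ^ t.-1)%N%:Z - 4) = q ((2 ^ t)%N%:Z - 5)
    & r ((2 ^ t.-1)%N%:Z - 1) = q ((2 ^ t)%N%:Z - 2)].
Proof.
case: t ht => [|[|u]] // _.
have -> : (2 ^ u.+2)%N%:Z = 2 * (2 ^ u.+1)%N%:Z by rewrite expnS PoszM.
exact: (pow_claim u).1.
Qed.
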